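(* Let $(M,\circ,\mathrm{OR})$ be a free $\mathbb{D}$-module of rank 3 with scalar product and orientation, and let $x,y,z\in M\setminus\epsilon M$ satisfy $x+y+z=0$. Then $$\alpha_{xy}+\alpha_{yz}+\alpha_{zx}=\pi.$$
   Context: $\mathbb{D}=\{a+\epsilon b: a,b\in\mathbb{R}\}$, $\epsilon^2=0$, $\mathfrak{Re}(a+\epsilon b)=a$; real-analytic functions are extended by $f(a+\epsilon b)=f(a)+\epsilon bf'(a)$. Scalar product: symmetric $\mathbb{D}$-bilinear $\circ:M\times M\to\mathbb{D}$ with $\mathfrak{Re}(x\circ x)\ge0$, equality iff $x\in\epsilon M$; orientation: one of the two classes of ordered bases under $\{b'_j=A_{jk}b_k\}\sim\{b_k\}$ iff $\det\mathfrak{Re}(A)>0$. For $x\notin\epsilon M$, $|x|:=\sqrt{x\circ x}$ (positive real part). For $x,y\in M\setminus\epsilon M$ the dual angle $\Theta_{xy}$ is the unique dual number in $\{0\}\cup((0,\pi)+\epsilon\mathbb{R})\cup\{\pi\}$ with $\cos\Theta_{xy}=\frac{x\circ y}{|x|\,|y|}$, and $\alpha_{xy}:=\pi-\Theta_{xy}$. *)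

(* Defs.v *)
From HB Require Import structures.
From mathcomp Require Import all_boot all_order all_algebra.
From mathcomp Require Import all_classical all_reals all_analysis.
From mathcomp Require Import ring.
From Stdlib Require Import ClassicalEpsilon.
Set Implicit Arguments. Unset Strict Implicit. Unset Printing Implicit Defensive.
Import Order.TTheory GRing.Theory Num.Theory.
Local Open Scope ring_scope.

(* Dual numbers a + eps b over a real field, represented as pairs (a, b). *)
Definition dual (R : Type) : Type := (R * R)%type.

Section DualRing.
Variable R : realType.
HB.instance Definition _ := GRing.Zmodule.on (dual R).

Definition dmk (a b : R) : dual R := (a, b).
Definition re (x : dual R) : R := x.1.
Definition du (x : dual R) : R := x.2.
Definition done : dual R := (1, 0).
Definition deps : dual R := (0, 1).
Definition dmul (x y : dual R) : dual R := (x.1 * y.1, x.1 * y.2 + x.2 * y.1).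

Lemma dmulA : associative dmul.
Proof. by move=> [a b] [c d] [e f]; rewrite /dmul /=; congr pair; ring. Qed.
Lemma dmulC : commutative dmul.
Proof. by move=> [a b] [c d]; rewrite /dmul /=; congr pair; ring. Qed.
Lemma dmul1 : left_id done dmul.
Proof. by move=> [a b]; rewrite /dmul /=; congr pair; ring. Qed.
Lemma daddE (p q : dual R) : p + q = (p.1 + q.1, p.2 + q.2).
Proof. by case: p; case: q. Qed.
Lemma dmulDl : left_distributive dmul +%R.
Proof.
move=> [a b] [c d] [e f]; rewrite /dmul !daddE /=.
by congr pair; ring.
Qed.
Lemma done_neq0 : done != 0.
Proof. by apply/eqP => -[] /eqP; rewrite oner_eq0. Qed.

HB.instance Definition _ :=
  GRing.Zmodule_isComNzRing.Build (dual R) dmulA dmulC dmul1 dmulDl done_neq0.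

(* Extension of real-analytic functions: f (a + eps b) = f a + eps b f'(a). *)
Definition dcos (x : dual R) : dual R := (cos x.1, - (x.2 * sin x.1)).
Definition dsqrt (x : dual R) : dual R :=
  (Num.sqrt x.1, x.2 / (2 * Num.sqrt x.1)).
Definition dinv (x : dual R) : dual R := (x.1^-1, - (x.2 / x.1 ^+ 2)).
Definition dpi : dual R := (pi, 0).
End DualRing.

Section Module.
Variables (R : realType) (M : lmodType (dual R)).

Definition epsM (x : M) : Prop := exists m : M, x = deps R *: m.

Definition is_basis3 (b : 'I_3 -> M) : Prop :=
  forall x : M, exists! c : 'I_3 -> dual R, x = \sum_(i < 3) c i *: b i.
Definition free_rank3 : Prop := exists b, is_basis3 b.

Definition scalar_product (sp : M -> M -> dual R) : Prop :=
  [/\ forall x y, sp x y = sp y x,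
      forall a x y z, sp (a *: x + y) z = a * sp x z + sp y z,
      forall x, 0 <= re (sp x x) &
      forall x, re (sp x x) = 0 <-> epsM x].

Definition same_orientation (b b' : 'I_3 -> M) : Prop :=
  exists A : 'M[dual R]_3, (forall j, b' j = \sum_(k < 3) A j k *: b k)
                           /\ 0 < \det (map_mx (@re R) A).
Definition orientation (OR : ('I_3 -> M) -> Prop) : Prop :=
  exists b0, is_basis3 b0 /\
    forall b, OR b <-> (is_basis3 b /\ same_orientation b0 b).

Definition dnorm (sp : M -> M -> dual R) (x : M) : dual R := dsqrt (sp x x).

Definition is_dual_angle (sp : M -> M -> dual R) (x y : M) (T : dual R) : Prop :=
  (T = 0 \/ (0 < re T < pi) \/ T = dpi R) /\
  dcos T = sp x y * dinv (dnorm sp x * dnorm sp y).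

Definition dual_angle (sp : M -> M -> dual R) (x y : M) : dual R :=
  epsilon (inhabits 0) (is_dual_angle sp x y).

Definition alpha (sp : M -> M -> dual R) (x y : M) : dual R :=
  dpi R - dual_angle sp x y.
End Module.

(* Main.v *)
Require Import Defs.
From HB Require Import structures.
From mathcomp Require Import all_boot all_order all_algebra.
From mathcomp Require Import all_classical all_reals all_analysis.
From mathcomp Require Import ring lra.
From Stdlib Require Import ClassicalEpsilon.
Import Order.TTheory GRing.Theory Num.Theory.
Local Open Scope ring_scope.
Section S.
Variable R : realType.
Lemma dmulE (p q : dual R) : p * q = (p.1 * q.1, p.1 * q.2 + p.2 * q.1).
Proof. by []. Qed.
Lemma daddE' (p q : dual R) : p + q = (p.1 + q.1, p.2 + q.2).
Proof. by case: p; case: q. Qed.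
Lemma doppE (p : dual R) : - p = (- p.1, - p.2).
Proof. by case: p. Qed.
Lemma d1E : (1 : dual R) = (1, 0).
Proof. by []. Qed.
Lemma d0E : (0 : dual R) = (0, 0).
Proof. by []. Qed.
Lemma dpairE (p : dual R) : p = (p.1, p.2).
Proof. by case: p. Qed.

Lemma dmul_eq0 (p q : dual R) : p * q = 0 -> q.1 != 0 -> p = 0.
Proof.
rewrite dmulE d0E => -[h1 h2] hq.
have p1: p.1 = 0 by move: h1 => /eqP; rewrite mulf_eq0 (negbTE hq) orbF => /eqP.
move: h2; rewrite p1 mul0r add0r => /eqP; rewrite mulf_eq0 (negbTE hq) orbF => /eqP p2.
by rewrite (dpairE p) p1 p2.
Qed.

Lemma dinvK (p : dual R) : p.1 != 0 -> Defs.dinv p * p = 1.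
Proof.
move=> h; rewrite dmulE d1E /Defs.dinv /=; congr pair; field; done.
Qed.

Lemma dsqrtK (p : dual R) : 0 < p.1 -> dsqrt p * dsqrt p = p.
Proof.
move=> h; rewrite dmulE (dpairE p) /dsqrt /=.
have hs : 0 < Num.sqrt p.1 by rewrite sqrtr_gt0.
congr pair; first by rewrite -expr2 sqr_sqrtr // ltW.
field; by rewrite gt_eqF.
Qed.

Lemma f_dual (c1 c2 c3 : dual R) :
  (1 + c1*c2*c3 + c1*c2*c3 - c1*c1 - c2*c2 - c3*c3).2 =
  2 * ((c2.1*c3.1 - c1.1)*c1.2 + (c1.1*c3.1 - c2.1)*c2.2 + (c1.1*c2.1 - c3.1)*c3.2).
Proof.
case: c1 c2 c3 => [a1 b1] [a2 b2] [a3 b3].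
rewrite !(daddE', doppE, dmulE) /=; ring.
Qed.
End S.

Set Implicit Arguments. Unset Strict Implicit. Unset Printing Implicit Defensive.
Section T.
Variable R : realType.

Lemma sq_pos_eq (x y : R) : 0 < x -> 0 < y -> x*x = y*y -> x = y.
Proof. move=> hx hy h; nra. Qed.

Ltac fld := field; try (by repeat (apply/andP; split); (assumption || by rewrite ?pnatr_eq0)).

Definition angle_ok (T c : dual R) :=
  (T = 0 \/ (0 < re T < pi) \/ T = dpi R) /\ dcos T = c.

Lemma ok_parts T c : angle_ok T c -> c.1 = cos T.1 /\ c.2 = - (T.2 * sin T.1).
Proof. by case=> _ <-. Qed.

Lemma ok_cases T c : angle_ok T c ->
  (T = 0 /\ c.1 = 1) \/ (0 < T.1 < pi /\ c.1 * c.1 < 1) \/ (T = dpi R /\ c.1 = -1).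
Proof.
move=> h; have [h1 h2] := ok_parts h.
case: h => [[eT|[hm|eT]] _].
- by left; split => //; rewrite h1 eT; exact: cos0.
- right; left; split => //.
  have hs : 0 < sin T.1 by apply: sin_gt0_pi.
  have := cos2Dsin2 T.1; rewrite h1 !expr2; nra.
- by right; right; split => //; rewrite h1 eT; exact: cospi.
Qed.

Lemma trig (a b c P : R) (T1 T2 T3 c1 c2 c3 : dual R) :
  0 < a -> 0 < b -> 0 < c -> c * c = a * a + b * b + P + P ->
  P * P <= a * a * (b * b) ->
  angle_ok T1 c1 -> angle_ok T2 c2 -> angle_ok T3 c3 ->
  c1.1 = P / (a * b) -> c2.1 = - (P + b * b) / (b * c) ->
  c3.1 = - (a * a + P) / (a * c) ->
  (c2.1*c3.1 - c1.1)*c1.2 + (c1.1*c3.1 - c2.1)*c2.2 + (c1.1*c2.1 - c3.1)*c3.2 = 0 ->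
  T1 + T2 + T3 = dpi R + dpi R.
Proof.
move=> ha hb hc hcc hCS ok1 ok2 ok3 e1 e2 e3 hd.
have eP : P = (c * c - a * a - b * b) / 2 by rewrite hcc; fld.
have an : a != 0 by rewrite gt_eqF. have bn : b != 0 by rewrite gt_eqF.
have cn : c != 0 by rewrite gt_eqF.
set Q := a * a * (b * b) - P * P.
have hQ : 0 <= Q by rewrite /Q subr_ge0.
have F1 : 1 - c1.1 * c1.1 = Q / (a * b) ^+ 2 by rewrite e1 /Q; fld.
have F2 : 1 - c2.1 * c2.1 = Q / (b * c) ^+ 2 by rewrite e2 /Q eP; fld.
have F3 : 1 - c3.1 * c3.1 = Q / (a * c) ^+ 2 by rewrite e3 /Q eP; fld.
have G1 : c2.1 * c3.1 - c1.1 = Q / (a * b * (c * c)) by rewrite e1 e2 e3 /Q eP; fld.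
have G2 : c1.1 * c3.1 - c2.1 = Q / (a * a * b * c) by rewrite e1 e2 e3 /Q eP; fld.
have G3 : c1.1 * c2.1 - c3.1 = Q / (a * b * b * c) by rewrite e1 e2 e3 /Q eP; fld.
have [Q0|Qpos] := eqVneq Q 0.
  rewrite Q0 mul0r in F1; rewrite Q0 mul0r in F2; rewrite Q0 mul0r in F3;
  rewrite Q0 mul0r in G1.
  have nm : forall T c0, angle_ok T c0 -> 1 - c0.1 * c0.1 = 0 ->
      (T = 0 /\ c0.1 = 1) \/ (T = dpi R /\ c0.1 = -1).
    move=> T c0 ok h; case: (ok_cases ok) => [?|[[_ hm]|?]]; [by left| |by right].
    exfalso; lra.
  have no11 : ~ (c1.1 = 1 /\ c2.1 = 1).
    case=> h1 h2; move: e1 e2; rewrite h1 h2 => e1 e2.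
    have hP : P = a * b.
      by have := congr1 (fun t => t * (a*b)) e1; rewrite /= mul1r mulfVK ?mulf_neq0.
    have := congr1 (fun t => t * (b*c)) e2; rewrite /= mul1r mulfVK ?mulf_neq0 // hP.
    nra.
  have dpE : dpi R + dpi R = (pi + pi, 0) by rewrite daddE' /= addr0.
  case: (nm _ _ ok1 F1) => [[-> r1]|[-> r1]];
  case: (nm _ _ ok2 F2) => [[-> r2]|[-> r2]];
  case: (nm _ _ ok3 F3) => [[-> r3]|[-> r3]];
  rewrite ?r1 ?r2 ?r3 in G1 no11;
  rewrite dpE /dpi ?d0E !daddE' /= ?addr0 ?add0r //;
  try (exfalso; by apply: no11);
  exfalso; move: G1; lra.
have Qp : 0 < Q by rewrite lt_neqAle eq_sym Qpos hQ.
set q := Num.sqrt Q.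
have qp : 0 < q by rewrite sqrtr_gt0.
have qq : q * q = Q by rewrite -expr2 sqr_sqrtr.
have mid : forall T c0 k, angle_ok T c0 -> 1 - c0.1 * c0.1 = Q / k ^+ 2 -> 0 < k ->
   [/\ 0 < T.1 < pi, c0.1 = cos T.1, c0.2 = - (T.2 * sin T.1) & sin T.1 = q / k].
  move=> T c0 k ok h kp; have [h1 h2] := ok_parts ok.
  have hpos : 0 < Q / k ^+ 2 by apply: divr_gt0 => //; apply: exprn_gt0.
  have hm : 0 < T.1 < pi.
    case: (ok_cases ok) => [[_ hc0]|[[hm _]|[_ hc0]]] //; exfalso; move: h; rewrite hc0 => h; lra.
  split => //.
  have hs : 0 < sin T.1 by apply: sin_gt0_pi.
  apply: sq_pos_eq => //; first by apply: divr_gt0.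
  have := sin2cos2 T.1; rewrite !expr2 -h1 => ->; rewrite h; rewrite -qq; fld.
  by rewrite gt_eqF.
have [m1 r1 d1 s1] := mid _ _ _ ok1 F1 (mulr_gt0 ha hb).
have [m2 r2 d2 s2] := mid _ _ _ ok2 F2 (mulr_gt0 hb hc).
have [m3 r3 d3 s3] := mid _ _ _ ok3 F3 (mulr_gt0 ha hc).
set t1 := T1.1 in m1 r1 d1 s1 *. set t2 := T2.1 in m2 r2 d2 s2 *.
set t3 := T3.1 in m3 r3 d3 s3 *.
have cosS : cos (t2 + t3) = c1.1.
  rewrite cosD -r2 -r3 s2 s3; apply/eqP; rewrite -subr_eq0; apply/eqP.
  have -> : c2.1 * c3.1 - q / (b * c) * (q / (a * c)) - c1.1 =
           (c2.1 * c3.1 - c1.1) - q * q / (a * b * (c * c)) by fld.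
  by rewrite G1 qq subrr.
have sinS : sin (t2 + t3) = - (q / (a * b)).
  rewrite sinD -r2 -r3 s2 s3 e2 e3 eP; fld.
move/andP: m1 => [m1a m1b]; move/andP: m2 => [m2a m2b]; move/andP: m3 => [m3a m3b].
set phi := t2 + t3 - pi.
have sphi : sin phi = q / (a * b) by rewrite /phi sinB sinS cospi sinpi; ring.
have cphi : cos phi = - c1.1 by rewrite /phi cosB cosS cospi sinpi; ring.
have sp1 : 0 < q / (a * b) by apply: divr_gt0 => //; apply: mulr_gt0.
have phi_pos : 0 < phi.
  rewrite ltNge; apply/negP => hle.
  have : 0 <= sin (- phi) by apply: sin_ge0_pi; apply/andP; split; rewrite /phi in hle *; lra.
  rewrite sinN sphi; lra.
have heq : phi = pi - t1.
  apply: cos_inj; [rewrite in_itv /=; apply/andP; split; rewrite /phi in phi_pos *; lra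
   | rewrite in_itv /=; apply/andP; split; lra
   | rewrite cphi cosB cospi sinpi -r1; ring].
have H1 : c2.1 * c3.1 - c1.1 = sin t2 * sin t3.
  rewrite G1 s2 s3 -qq; fld.
have H2 : c1.1 * c3.1 - c2.1 = sin t1 * sin t3.
  rewrite G2 s1 s3 -qq; fld.
have H3 : c1.1 * c2.1 - c3.1 = sin t1 * sin t2.
  rewrite G3 s1 s2 -qq; fld.
rewrite H1 H2 H3 d1 d2 d3 in hd.
have hsum : T1.2 + T2.2 + T3.2 = 0.
  have hs1 : 0 < sin t1 by apply: sin_gt0_pi; rewrite m1a m1b.
  have hs2 : 0 < sin t2 by apply: sin_gt0_pi; rewrite m2a m2b.
  have hs3 : 0 < sin t3 by apply: sin_gt0_pi; rewrite m3a m3b.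
  have : (sin t1 * sin t2 * sin t3) * (T1.2 + T2.2 + T3.2) = 0.
    by apply/eqP; rewrite -oppr_eq0; apply/eqP; rewrite -hd; ring.
  move/eqP; rewrite mulf_eq0 => /orP [|/eqP //].
  by rewrite gt_eqF // !mulr_gt0.
rewrite !daddE' /dpi /= hsum; congr pair.
  by move: heq; rewrite /phi /t1 /t2 /t3; lra.
by rewrite addr0.
Qed.
End T.

Lemma fc0 (R' : comRingType) (c1 c2 c3 nx ny nz Sxx Syy Szz Sxy Syz Szx : R') :
 nx*nx = Sxx -> ny*ny = Syy -> nz*nz = Szz -> c1*(nx*ny) = Sxy -> c2*(ny*nz) = Syz ->
 c3*(nz*nx) = Szx ->
 Syz = -(Sxy+Syy) -> Szx = -(Sxx+Sxy) -> Szz = Sxx+Syy+Sxy+Sxy ->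
 (1 + c1*c2*c3 + c1*c2*c3 - c1*c1 - c2*c2 - c3*c3) * ((nx*ny*nz)*(nx*ny*nz)) = 0.
Proof.
move=> hx hy hz h1 h2 h3 e2 e3 ez.
have hdet : Sxx*Syy*Szz + Sxy*Syz*Szx + Sxy*Syz*Szx - Sxy*Sxy*Szz - Syz*Syz*Sxx
   - Szx*Szx*Syy = 0 by rewrite e2 e3 ez; ring.
rewrite -hx -hy -hz -h1 -h2 -h3 in hdet.
by rewrite -hdet; ring.
Qed.

Section Mod.
Variable R : realType.
Variable M : lmodType (dual R).
Variable sp : M -> M -> dual R.
Hypothesis hsp : scalar_product sp.

Lemma dmul1E (p q : dual R) : (p * q).1 = p.1 * q.1. Proof. by []. Qed.

Lemma spC x y : sp x y = sp y x. Proof. by case: hsp. Qed.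
Lemma spDZl a x y z : sp (a *: x + y) z = a * sp x z + sp y z. Proof. by case: hsp. Qed.
Lemma sp0l z : sp 0 z = 0.
Proof.
have h := spDZl 1 0 0 z; rewrite scaler0 addr0 mul1r in h.
by apply: (addrI (sp 0 z)); rewrite addr0 -h.
Qed.
Lemma spDl x y z : sp (x + y) z = sp x z + sp y z.
Proof. by have := spDZl 1 x y z; rewrite scale1r mul1r. Qed.
Lemma spZl a x z : sp (a *: x) z = a * sp x z.
Proof. by have := spDZl a x 0 z; rewrite addr0 sp0l addr0. Qed.
Lemma spNl x z : sp (- x) z = - sp x z.
Proof. by rewrite -scaleN1r spZl mulN1r. Qed.
Lemma spDr x y z : sp z (x + y) = sp z x + sp z y.
Proof. by rewrite spC spDl !(spC z). Qed.
Lemma spZr a x z : sp z (a *: x) = a * sp z x.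
Proof. by rewrite spC spZl (spC z). Qed.
Lemma spNr x z : sp z (- x) = - sp z x.
Proof. by rewrite spC spNl (spC z). Qed.

Lemma re_pos u : ~ epsM u -> 0 < re (sp u u).
Proof.
case: hsp => _ _ h3 h4 hu; rewrite lt_neqAle h3 andbT eq_sym; apply/eqP => /h4.
exact: hu.
Qed.

Lemma nrm_pos u : ~ epsM u -> 0 < (dnorm sp u).1.
Proof. by move=> hu; rewrite /dnorm /dsqrt /= sqrtr_gt0; apply: re_pos. Qed.

Lemma expand t u v :
  sp (t *: u + v) (t *: u + v) = t * t * sp u u + t * sp u v + t * sp u v + sp v v.
Proof. rewrite spDZl !spDr !spZr (spC v u); ring. Qed.

Definition cosv u v := sp u v * Defs.dinv (dnorm sp u * dnorm sp v).

Lemma dnormK u : ~ epsM u -> dnorm sp u * dnorm sp u = sp u u.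
Proof. by move=> h; apply: dsqrtK; apply: re_pos. Qed.

Lemma cos_mul u v : ~ epsM u -> ~ epsM v ->
  cosv u v * (dnorm sp u * dnorm sp v) = sp u v.
Proof.
move=> hu hv; rewrite /cosv -mulrA dinvK ?mulr1 //.
by rewrite dmul1E gt_eqF // mulr_gt0 // nrm_pos.
Qed.

Lemma cos_re u v : (cosv u v).1 =
  re (sp u v) / (Num.sqrt (re (sp u u)) * Num.sqrt (re (sp v v))).
Proof. by []. Qed.

Lemma expr_re (A P B : R) : A != 0 ->
  (- (P / A)) * (- (P / A)) * A + (- (P / A)) * P + (- (P / A)) * P + B
  = B - P * P / A.
Proof. by move=> hA; field. Qed.

Lemma expand_re (t : dual R) u v :
  re (sp (t *: u + v) (t *: u + v)) =
  t.1 * t.1 * re (sp u u) + t.1 * re (sp u v) + t.1 * re (sp u v) + re (sp v v).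
Proof. by rewrite expand /re !daddE' /=. Qed.

Lemma CS u v : ~ epsM u -> re (sp u v) * re (sp u v) <= re (sp u u) * re (sp v v).
Proof.
move=> hu; have hA := re_pos hu.
case: hsp => _ _ h3 _.
have := h3 (((- (re (sp u v) / re (sp u u)), 0) : dual R) *: u + v).
rewrite expand_re /= expr_re ?gt_eqF // => h.
have h2 : 0 <= re (sp u u) * (re (sp v v) - re (sp u v) * re (sp u v) / re (sp u u)).
  by apply: mulr_ge0 => //; apply: ltW.
have e : re (sp u u) * (re (sp v v) - re (sp u v) * re (sp u v) / re (sp u u))
  = re (sp u u) * re (sp v v) - re (sp u v) * re (sp u v).
  by field; rewrite gt_eqF.
lra.
Qed.

Lemma deps2 : deps R * deps R = 0.
Proof. by rewrite dmulE /deps /= !mul0r mulr0 addr0. Qed.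

Lemma degen u v : ~ epsM u ->
  re (sp u v) * re (sp u v) = re (sp u u) * re (sp v v) ->
  sp u v * sp u v = sp u u * sp v v.
Proof.
move=> hu hPP; have hA := re_pos hu.
case: hsp => _ _ _ h4.
set l : dual R := (re (sp u v) / re (sp u u), 0).
set w := (- l) *: u + v.
have hw : re (sp w w) = 0.
  rewrite /w expand_re /= expr_re ?gt_eqF // hPP; field; by rewrite gt_eqF.
have [m hm] := (h4 w).1 hw.
have ev : v = l *: u + deps R *: m.
  by rewrite -hm /w scaleNr addrA addrN add0r.
rewrite ev !(spDr, spZr, spDl, spZl) (spC m u).
apply/eqP; rewrite -subr_eq0; apply/eqP.
transitivity (deps R * deps R * (sp u m * sp u m - sp u u * sp m m)); first ring.
by rewrite deps2 !mul0r.
Qed.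

Lemma dcos0 : dcos (0 : dual R) = (1, 0).
Proof.
change ((cos (0:R), - ((0:R) * sin (0:R))) = (1, 0)).
by rewrite cos0 mul0r oppr0.
Qed.

Lemma dcospi : dcos (dpi R) = (-1, 0).
Proof.
change ((cos (pi:R), - ((0:R) * sin (pi:R))) = (-1, 0)).
by rewrite cospi mul0r oppr0.
Qed.

Lemma angle_exists u v : ~ epsM u -> ~ epsM v -> exists T, is_dual_angle sp u v T.
Proof.
move=> hu hv.
rewrite /is_dual_angle -/(cosv u v).
set c := cosv u v.
have hA := re_pos hu; have hB := re_pos hv.
have hcs := CS v hu.
have hr := cos_re u v; rewrite -/c in hr.
set a := Num.sqrt (re (sp u u)) in hr.
set b := Num.sqrt (re (sp v v)) in hr.
have ap : 0 < a by rewrite sqrtr_gt0. have bp : 0 < b by rewrite sqrtr_gt0.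
have aa : a * a = re (sp u u) by rewrite -expr2 sqr_sqrtr // ltW.
have bb : b * b = re (sp v v) by rewrite -expr2 sqr_sqrtr // ltW.
have rr : c.1 * c.1 = re (sp u v) * re (sp u v) / (re (sp u u) * re (sp v v)).
  rewrite hr -aa -bb; field; by rewrite !gt_eqF.
have [lt|ge] := ltP (re (sp u v) * re (sp u v)) (re (sp u u) * re (sp v v)).
  clearbody c.
  have r1 : c.1 * c.1 < 1.
    by rewrite rr ltr_pdivrMr ?mul1r // mulr_gt0.
  have rb1 : -1 < c.1 by nra.
  have rb2 : c.1 < 1 by nra.
  have hs : 0 < sin (acos c.1).
    by apply: sin_gt0_pi; rewrite acos_gt0 ?acos_ltpi ?rb1 ?rb2 ?ltW.
  exists (acos c.1, - c.2 / sin (acos c.1)); split.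
    by right; left; rewrite /re /= acos_gt0 ?acos_ltpi ?rb1 ?rb2 ?ltW.
  rewrite /dcos /= [RHS]dpairE; congr pair.
    by rewrite acosK // in_itv /= !ltW.
  by field; rewrite gt_eqF.
have eq' : re (sp u v) * re (sp u v) = re (sp u u) * re (sp v v).
  by apply/eqP; rewrite eq_le hcs ge.
have hd := degen hu eq'.
have hN : (c * c - 1) * ((dnorm sp u * dnorm sp v) * (dnorm sp u * dnorm sp v)) = 0.
  have -> : (c * c - 1) * ((dnorm sp u * dnorm sp v) * (dnorm sp u * dnorm sp v))
    = (c * (dnorm sp u * dnorm sp v)) * (c * (dnorm sp u * dnorm sp v))
      - (dnorm sp u * dnorm sp u) * (dnorm sp v * dnorm sp v) by ring.
  by rewrite cos_mul // !dnormK // hd subrr.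
have cc : c * c = 1.
  apply/eqP; rewrite -subr_eq0; apply/eqP; apply: (@dmul_eq0 _ _ _ hN).
  by rewrite !dmul1E gt_eqF // !mulr_gt0 // nrm_pos.
clearbody c.
have c1 : c.1 * c.1 = 1 by have := congr1 fst cc; rewrite dmulE.
have c2 : c.2 = 0.
  have := congr1 snd cc; rewrite dmulE /= => h.
  have : c.1 * c.2 *+ 2 = 0 by rewrite mulr2n {2}mulrC h.
  rewrite -mulr_natr; move/eqP; rewrite !mulf_eq0 pnatr_eq0 /= orbF.
  case/orP => /eqP // h0; move: c1; rewrite h0 mul0r => /eqP; rewrite eq_sym oner_eq0.
  done.
have : (c.1 - 1) * (c.1 + 1) = 0.
  by transitivity (c.1 * c.1 - 1); [ring | rewrite c1 subrr].
move/eqP; rewrite mulf_eq0 => /orP [/eqP h|/eqP h].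
  exists 0; split; first by left.
  by rewrite dcos0 [RHS]dpairE c2; congr pair; lra.
exists (dpi R); split; first by right; right.
by rewrite dcospi [RHS]dpairE c2; congr pair; lra.
Qed.

End Mod.

Unset Implicit Arguments.

Theorem proposition20 (R : realType) (M : lmodType (dual R))
  (sp : M -> M -> dual R) (OR : ('I_3 -> M) -> Prop)
  (hfree : free_rank3 M) (hsp : scalar_product sp) (hOR : orientation OR)
  (x y z : M) (hx : ~ epsM x) (hy : ~ epsM y) (hz : ~ epsM z)
  (hsum : x + y + z = 0) :
  alpha sp x y + alpha sp y z + alpha sp z x = dpi R.
Proof.
have ez : z = - (x + y) by apply/eqP; rewrite -addr_eq0 [z + _]addrC hsum.
have ok1 : angle_ok (dual_angle sp x y) (cosv sp x y).
  exact: (epsilon_spec (inhabits 0) _ (angle_exists hsp hx hy)).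
have ok2 : angle_ok (dual_angle sp y z) (cosv sp y z).
  exact: (epsilon_spec (inhabits 0) _ (angle_exists hsp hy hz)).
have ok3 : angle_ok (dual_angle sp z x) (cosv sp z x).
  exact: (epsilon_spec (inhabits 0) _ (angle_exists hsp hz hx)).
have Szz : sp z z = sp x x + sp y y + sp x y + sp x y.
  rewrite ez (spNl hsp) (spNr hsp) opprK (spDl hsp) !(spDr hsp) (spC hsp y x); ring.
have Syz : sp y z = - (sp x y + sp y y).
  by rewrite ez (spNr hsp) (spDr hsp) (spC hsp y x).
have Szx : sp z x = - (sp x x + sp x y).
  by rewrite ez (spNl hsp) (spDl hsp) (spC hsp y x).
have hf := fc0 (dnormK hsp hx) (dnormK hsp hy) (dnormK hsp hz)
  (cos_mul hsp hx hy) (cos_mul hsp hy hz) (cos_mul hsp hz hx) Syz Szx Szz.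
have hf0 := @dmul_eq0 _ _ _ hf.
have hf1 : (1 + cosv sp x y * cosv sp y z * cosv sp z x +
   cosv sp x y * cosv sp y z * cosv sp z x - cosv sp x y * cosv sp x y -
   cosv sp y z * cosv sp y z - cosv sp z x * cosv sp z x) = 0.
  apply: hf0; rewrite !dmul1E gt_eqF // !mulr_gt0 ?(nrm_pos hsp hx) ?(nrm_pos hsp hy) ?(nrm_pos hsp hz) //.
have hrel := congr1 snd hf1; rewrite f_dual /= in hrel.
move/eqP: hrel; rewrite mulf_eq0 pnatr_eq0 /= => /eqP hrel.
have := CS hsp y hx.
have hA := re_pos hsp hx; have hB := re_pos hsp hy; have hC := re_pos hsp hz.
set a := Num.sqrt (re (sp x x)).
set b := Num.sqrt (re (sp y y)).
set c := Num.sqrt (re (sp z z)).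
have ap : 0 < a by rewrite sqrtr_gt0. have bp : 0 < b by rewrite sqrtr_gt0.
have cp : 0 < c by rewrite sqrtr_gt0.
have aa : a * a = re (sp x x) by rewrite -expr2 sqr_sqrtr // ltW.
have bb : b * b = re (sp y y) by rewrite -expr2 sqr_sqrtr // ltW.
have cc : c * c = re (sp z z) by rewrite -expr2 sqr_sqrtr // ltW.
move=> hCS.
have hcc : c * c = a * a + b * b + re (sp x y) + re (sp x y).
  by rewrite cc aa bb Szz /re !daddE'.
have hCS' : re (sp x y) * re (sp x y) <= a * a * (b * b) by rewrite aa bb.
have e1 : (cosv sp x y).1 = re (sp x y) / (a * b) by rewrite cos_re.
have e2 : (cosv sp y z).1 = - (re (sp x y) + b * b) / (b * c).
  by rewrite cos_re -/b -/c Syz bb /re doppE daddE'.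
have e3 : (cosv sp z x).1 = - (a * a + re (sp x y)) / (a * c).
  by rewrite cos_re -/a -/c Szx aa /re doppE daddE' [c * a]mulrC.
have H := trig ap bp cp hcc hCS' ok1 ok2 ok3 e1 e2 e3 hrel.
rewrite /alpha.
transitivity (dpi R + dpi R + dpi R - (dual_angle sp x y + dual_angle sp y z + dual_angle sp z x)).
  ring.
rewrite H; ring.
Qed.
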